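(* Let $q$ be a prime power and $F/\mathbb{F}_q$ an algebraic function field with full constant field $\mathbb{F}_q$ of genus $g\geq 2$. For $n\geq 0$ let $A_n$ be the number of effective divisors of degree $n$ of $F$, for $r\geq 1$ let $B_r$ be the number of places of degree $r$ of $F$, let $\Sigma_2=q^{g-1}\sum_{n=0}^{g-2}A_n/q^n$, let $\Delta_2=\{r:1\leq r\leq g-2,\ B_r\geq 1\}$ and $\Delta_2'=\Delta_2\setminus\{1\}$. (1) Suppose $B_1\geq 1$. Let $(m_r)_{r\in\Delta_2}$ be integers with $m_r\geq 0$ and $\sum_{r\in\Delta_2} r\,m_r\leq g-2$. Then $$\Sigma_2\geq q^{g-1}\prod_{r\in\Delta_2}\left[\sum_{b=0}^{m_r}\frac{1}{q^{rb}}\binom{B_r+b-1}{b}\right].$$ (2) Let $r_1,\dots,r_u$ be distinct elements of $\Delta_2'$. Then $$\Sigma_2\geq q^{g-1}\sum_{b_1=0}^{g-2}\frac{1}{q^{b_1}}\binom{B_1+b_1-1}{b_1}+q^{g-1}\sum_{i=1}^u\left[\sum_{b_1=0}^{(g-2)\bmod r_i}\frac{1}{q^{b_1}}\binom{B_1+b_1-1}{b_1}\right]\left[\sum_{b=0}^{\lfloor\frac{g-2}{r_i}\rfloor}\frac{1}{q^{r_ib}}\binom{B_{r_i}+b-1}{b}-1\right].$$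
   Context: $(g-2)\bmod r$ denotes the remainder of the Euclidean division of $g-2$ by $r$. Binomial coefficients $\binom{B+b-1}{b}$ (the number of multisets of size $b$ from a set of size $B$) follow the convention that for $B=0$ they equal $1$ if $b=0$ and $0$ if $b\geq 1$. *)

(* Defs.v *)
From HB Require Import structures.
From mathcomp Require Import all_boot all_order all_algebra.
From Stdlib Require List.
Set Implicit Arguments. Unset Strict Implicit. Unset Printing Implicit Defensive.
Import Order.TTheory GRing.Theory Num.Theory.
Local Open Scope ring_scope.


Definition alg_over (K : finFieldType) (F : fieldType) (iota : {rmorphism K -> F})
  (y : F) : Prop :=
  exists p : {poly K}, p != 0 /\ (map_poly iota p).[y] = 0.

Definition in_Kx (K : finFieldType) (F : fieldType) (iota : {rmorphism K -> F})
  (x z : F) : Prop :=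
  exists a b : {poly K}, (map_poly iota b).[x] != 0 /\
    z = (map_poly iota a).[x] / (map_poly iota b).[x].

Definition is_function_field (K : finFieldType) (F : fieldType)
  (iota : {rmorphism K -> F}) : Prop :=
  exists x : F, ~ alg_over iota x /\
    exists (n : nat) (e : 'I_n -> F), forall y : F,
      exists c : 'I_n -> F, (forall i, in_Kx iota x (c i)) /\
        y = \sum_(i < n) c i * e i.

Definition full_constant_field (K : finFieldType) (F : fieldType)
  (iota : {rmorphism K -> F}) : Prop :=
  forall y : F, alg_over iota y -> exists c : K, y = iota c.

(* valuation rings of F/K; places are in bijection with them (P = maximal
   ideal of O), so we represent a place by its valuation ring *)
Definition is_valring (K : finFieldType) (F : fieldType)
  (iota : {rmorphism K -> F}) (O : F -> Prop) : Prop :=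
  [/\ (forall c : K, O (iota c)),
      (forall a b, O a -> O b -> [/\ O (a + b), O (a * b) & O (- a)]),
      (exists z, ~ O z) &
      (forall z : F, z != 0 -> O z \/ O z^-1)].

Definition place (K : finFieldType) (F : fieldType) (iota : {rmorphism K -> F}) :=
  {O : F -> Prop | is_valring iota O}.

Definition in_P (F : fieldType) (O : F -> Prop) (a : F) : Prop :=
  O a /\ (a = 0 \/ ~ O a^-1).

(* deg P = r : the residue field O/P has dimension r over K *)
Definition is_degree (K : finFieldType) (F : fieldType) (iota : {rmorphism K -> F})
  (P : place iota) (r : nat) : Prop :=
  let O := sval P in
  exists t : 'I_r -> F,
    [/\ (forall i, O (t i)),
        (forall a, O a -> exists c : 'I_r -> K,
                          in_P O (a - \sum_(i < r) iota (c i) * t i)) &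
        (forall c : 'I_r -> K, in_P O (\sum_(i < r) iota (c i) * t i) ->
                               forall i, c i = 0)].

Definition ord (K : finFieldType) (F : fieldType) (iota : {rmorphism K -> F})
  (P : place iota) (x : F) (n : int) : Prop :=
  let O := sval P in
  x != 0 /\
  exists t : F, [/\ t != 0, in_P O t,
    (forall a, in_P O a -> exists b, O b /\ a = t * b) &
    exists u : F, [/\ O u, O u^-1 & x = t ^ n * u]].

(* divisors: finitely supported functions place -> int *)
Definition div_fin (K : finFieldType) (F : fieldType) (iota : {rmorphism K -> F})
  (D : place iota -> int) : Prop :=
  exists s : list (place iota), forall P, D P != 0 -> List.In P s.

Definition div_deg (K : finFieldType) (F : fieldType) (iota : {rmorphism K -> F})
  (D : place iota -> int) (m : int) : Prop :=
  exists s : list (place iota),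
    [/\ List.NoDup s, (forall P, D P != 0 -> List.In P s) &
    exists d : place iota -> nat,
      (forall P, List.In P s -> is_degree P (d P)) /\
      \sum_(P <- s) D P * (d P)%:Z = m].

Definition eff_div_deg (K : finFieldType) (F : fieldType) (iota : {rmorphism K -> F})
  (D : place iota -> nat) (n : nat) : Prop :=
  exists s : list (place iota),
    [/\ List.NoDup s, (forall P, D P <> 0%N -> List.In P s) &
    exists d : place iota -> nat,
      (forall P, List.In P s -> is_degree P (d P)) /\
      (\sum_(P <- s) D P * d P)%N = n].

Definition in_L (K : finFieldType) (F : fieldType) (iota : {rmorphism K -> F})
  (D : place iota -> int) (x : F) : Prop :=
  x = 0 \/ forall P n, ord P x n -> - D P <= n.

Definition dim_L (K : finFieldType) (F : fieldType) (iota : {rmorphism K -> F})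
  (D : place iota -> int) (l : nat) : Prop :=
  exists b : 'I_l -> F,
    [/\ (forall i, in_L D (b i)),
        (forall x, in_L D x -> exists c : 'I_l -> K,
                                x = \sum_(i < l) iota (c i) * b i) &
        (forall c : 'I_l -> K, \sum_(i < l) iota (c i) * b i = 0 ->
                               forall i, c i = 0)].

(* genus g = max { deg D - ell(D) + 1 : D divisor }  (Stichtenoth 1.4.15) *)
Definition is_genus (K : finFieldType) (F : fieldType) (iota : {rmorphism K -> F})
  (g : nat) : Prop :=
  (forall (D : place iota -> int) m l, div_fin D -> div_deg D m -> dim_L D l -> m - l%:Z + 1 <= g%:Z) /\
  exists (D : place iota -> int) m l, [/\ div_fin D, div_deg D m, dim_L D l & m - l%:Z + 1 = g%:Z].

Definition card_is (T : Type) (X : T -> Prop) (N : nat) : Prop :=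
  exists f : 'I_N -> T, injective f /\ forall x, X x <-> exists i, f i = x.

(* Main.v *)
Require Import Defs.
From HB Require Import structures.
From mathcomp Require Import all_boot all_order all_algebra.
From mathcomp Require Import zify.
From Stdlib Require Import ClassicalEpsilon Classical.
From Stdlib Require List.
Import Order.TTheory GRing.Theory Num.Theory.

Set Implicit Arguments. Unset Strict Implicit. Unset Printing Implicit Defensive.

Lemma sum_nth_pad N (s : seq nat) : (size s <= N.+1)%N ->
  (\sum_(i < N.+1) nth 0%N s i = \sum_(x <- s) x)%N.
Proof.
move=> hs; rewrite [RHS](big_nth 0%N) big_mkord (big_ord_widen _ _ hs) [RHS]big_mkcond /=.
by apply: eq_bigr => i _; case: ifP => // /negbT; rewrite -leqNgt => h; rewrite nth_default.
Qed.

Lemma card_mult (N G B b : nat) : (B <= N.+1)%N -> (b <= G)%N ->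
  #|[set y : {ffun 'I_N.+1 -> 'I_G.+1} |
      [forall i : 'I_N.+1, (B <= i)%N ==> (y i == ord0)] && (\sum_i (y i : nat) == b)%N]|
  = 'C(B + b - 1, b).
Proof.
move=> hB hb; case: B hB => [|m] hB.
  rewrite add0n; case: b hb => [|b] hb.
    rewrite bin0; apply: (@eq_card1 _ [ffun=> ord0]) => y; rewrite !inE.
    apply/andP/eqP => [[/forallP h _]|->].
      by apply/ffunP => i; rewrite ffunE; apply/eqP; move: (h i).
    split; first by apply/forallP => i; rewrite ffunE.
    by rewrite big1 // => i _; rewrite ffunE.
  rewrite bin_small ?subn1 //; apply: eq_card0 => y; rewrite !inE.
  apply/negP => /andP [/forallP h /eqP hs].
  by move: hs; rewrite big1 // => i _; apply/eqP; move: (h i).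
rewrite addSn subn1 /= -(bin_sub (leq_addl m b)) addnK -card_ord_partitions.
pose phi (t : m.+1.-tuple 'I_b.+1) : {ffun 'I_N.+1 -> 'I_G.+1} :=
  [ffun i : 'I_N.+1 => inord (nth 0%N (map val t) i)].
have nth_le (t : m.+1.-tuple 'I_b.+1) i : (nth 0%N (map val t) i < G.+1)%N.
  case: (ltnP i (size (map val t))) => hi; last by rewrite nth_default.
  rewrite size_map in hi; rewrite (nth_map ord0) //; exact: leq_trans (ltn_ord _) _.
have phiE t (i : 'I_N.+1) : (phi t i : nat) = nth 0%N (map val t) i.
  by rewrite ffunE inordK.
have phi_inj : injective phi.
  move=> t1 t2 e; apply: val_inj; apply: (inj_map val_inj).
  apply: (@eq_from_nth _ 0%N); first by rewrite !size_map !size_tuple.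
  move=> i; rewrite size_map size_tuple => hi.
  have hiN : (i < N.+1)%N by apply: leq_trans hi hB.
  by rewrite -(phiE t1 (Ordinal hiN)) -(phiE t2 (Ordinal hiN)) e.
rewrite -(card_imset _ phi_inj); apply: eq_card => y; rewrite !inE.
apply/andP/imsetP => [[/forallP hv /eqP hs]|[t]].
  have yle i : (y i <= b)%N by rewrite -hs (bigD1 i) //= leq_addr.
  pose t := [tuple of mkseq (fun i => (inord (y (inord i)) : 'I_b.+1)) m.+1].
  have mt : map val t = mkseq (fun i => (y (inord i) : nat)) m.+1.
    change (map val (map (fun i => (inord (y (inord i)) : 'I_b.+1)) (iota 0 m.+1)) = map (fun i => (y (inord i) : nat)) (iota 0 m.+1)).
    by rewrite -map_comp; apply: eq_map => i /=; rewrite inordK // ltnS.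
  have yE : y = phi t.
    apply/ffunP => i; apply/eqP; rewrite -val_eqE /= phiE mt; apply/eqP.
    case: (ltnP i m.+1) => hi; first by rewrite nth_mkseq // inord_val.
    by rewrite nth_default ?size_mkseq //; move: (hv i); rewrite hi => /eqP ->.
  exists t => //; rewrite inE; apply/eqP; rewrite -[RHS]hs -(big_map val xpredT id).
  rewrite -(sum_nth_pad (N := N)) ?size_map ?size_tuple // yE.
  by apply: eq_bigr => i _; rewrite phiE.
move=> ht ->; split.
  apply/forallP => i; apply/implyP => hi; idtac.
  by rewrite -val_eqE /= phiE nth_default // size_map size_tuple.
move: ht; rewrite inE => /eqP hs; apply/eqP; rewrite -[RHS]hs -(big_map val xpredT id).
rewrite -(sum_nth_pad (N := N)) ?size_map ?size_tuple //.
by apply: eq_bigr => i _; rewrite phiE.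
Qed.

Section Comb.
Import GRing.Theory Num.Theory.
Local Open Scope ring_scope.
Variables (n N G : nat) (B' : nat -> nat) (Q : rat).
Hypothesis hBN : forall r, (r < n)%N -> (B' r <= N.+1)%N.
Hypothesis Q0 : Q != 0.

Definition Yt := {ffun 'I_N.+1 -> 'I_G.+1}.
Definition Xt := {ffun 'I_n -> Yt}.
Definition validr (r : nat) (y : Yt) :=
  [forall i : 'I_N.+1, (B' r <= i)%N ==> (y i == ord0)].
Definition ssum (y : Yt) : nat := (\sum_i (y i : nat))%N.
Definition degx (x : Xt) : nat := (\sum_(r < n) r * ssum (x r))%N.

Lemma row_sum (r : nat) (Pr : pred nat) : (r < n)%N ->
  (forall b, Pr b -> (b <= G)%N) ->
  \sum_(y : Yt | validr r y && Pr (ssum y)) (Q ^+ (r * ssum y))^-1 =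
  \sum_(b < G.+1 | Pr b) (Q ^+ (r * b))^-1 * ('C(B' r + b - 1, b))%:R.
Proof.
move=> hr hP.
rewrite (partition_big (fun y : Yt => (inord (ssum y) : 'I_G.+1)) (fun b : 'I_G.+1 => Pr b)); last first.
  by move=> y /andP [_ h]; rewrite inordK // ltnS hP.
apply: eq_bigr => b Pb.
rewrite (eq_bigr (fun _ => (Q ^+ (r * b))^-1)); last first.
  move=> y /andP [/andP [_ h] /eqP <-]; rewrite inordK // ltnS hP //.
rewrite sumr_const mulrC mulr_natl; congr (_ *+ _).
rewrite -(card_mult (N:=N) (G:=G)); first last.
- exact: hP.
- exact: hBN.
apply: eq_card => y; rewrite inE /= /validr.
apply/idP/idP => [/andP [/andP [hv hp] /eqP hb]|/andP [hv /eqP hs]].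
  rewrite hv /= -hb inordK // ltnS; exact: hP.
rewrite unfold_in /= hv /ssum hs Pb /=; apply/eqP/val_inj; rewrite /= inordK //.
Qed.

Lemma gen_prod (Pr : nat -> pred nat) : (forall r b, Pr r b -> (b <= G)%N) ->
  \sum_(x : Xt | [forall r : 'I_n, validr r (x r) && Pr r (ssum (x r))])
     (Q ^+ degx x)^-1 =
  \prod_(r < n) \sum_(b < G.+1 | Pr r b) (Q ^+ (r * b))^-1 * ('C(B' r + b - 1, b))%:R.
Proof.
move=> hP.
rewrite (eq_bigr (fun r : 'I_n => \sum_(y : Yt | validr r y && Pr r (ssum y)) (Q ^+ (r * ssum y))^-1)); last first.
  by move=> r _; rewrite row_sum // => b; apply: hP.
rewrite bigA_distr_big_dep; apply: eq_big => x.
  by apply/forallP/familyP => h r; move: (h r); rewrite unfold_in.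
move=> _; rewrite prodfV prodrXr.
by [].
Qed.

End Comb.


Section Deg.
Variables (K : finFieldType) (F : fieldType) (iota : {rmorphism K -> F}).
Local Open Scope ring_scope.

Lemma valO (O : F -> Prop) : is_valring iota O ->
  [/\ O 0, O 1, (forall a b, O a -> O b -> O (a + b)),
      (forall a b, O a -> O b -> O (a * b)) & (forall a, O a -> O (- a))].
Proof.
case=> hK hcl _ _; split.
- by rewrite -(rmorph0 iota); apply: hK.
- by rewrite -(rmorph1 iota); apply: hK.
- by move=> a b Oa Ob; case: (hcl a b Oa Ob).
- by move=> a b Oa Ob; case: (hcl a b Oa Ob).
- by move=> a Oa; case: (hcl a a Oa Oa).
Qed.

Lemma inP_add (O : F -> Prop) : is_valring iota O ->
  forall x y, in_P O x -> in_P O y -> in_P O (x + y).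
Proof.
move=> hv; have [O0 O1 OD OM ON] := valO hv; case: hv => _ _ _ hval.
have key a b : a != 0 -> a + b != 0 -> O (b / a) -> O ((a + b)^-1) -> O (a^-1).
  move=> a0 ab0 Oba Oi; have -> : a^-1 = (b / a + 1) * (a + b)^-1.
    by rewrite -[1](divff a0) -mulrDl addrC mulrAC divff // mul1r.
  by apply: OM => //; apply: OD.
move=> x y [Ox hx] [Oy hy]; split; first by apply: OD.
have [->|xy0] := eqVneq (x + y) 0; first by left.
right=> Oi.
have [x0|xn0] := eqVneq x 0.
  move: hy Oi xy0; rewrite x0 add0r => hy Oi y0.
  by case: hy => [/eqP|]; [rewrite (negbTE y0)|apply].
have [y0|yn0] := eqVneq y 0.
  move: hx Oi xy0; rewrite y0 addr0 => hx Oi x0.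
  by case: hx => [/eqP|]; [rewrite (negbTE x0)|apply].
have xy : x / y != 0 by rewrite mulf_neq0 ?invr_eq0.
case: (hval _ xy) => Hz.
  case: hy => [/eqP|]; first by rewrite (negbTE yn0).
  by apply; apply: (key y x) => //; rewrite addrC.
case: hx => [/eqP|]; first by rewrite (negbTE xn0).
by apply; apply: (key x y) => //; rewrite -invf_div.
Qed.

Lemma inP_opp (O : F -> Prop) : is_valring iota O ->
  forall x, in_P O x -> in_P O (- x).
Proof.
move=> hv; have [O0 O1 OD OM ON] := valO hv.
move=> x [Ox [->|hx]]; first by rewrite oppr0; split => //; left.
split; first exact: ON.
by right=> H; apply: hx; rewrite -[x]opprK invrN; apply: ON.
Qed.

Lemma Osum (O : F -> Prop) (hv : is_valring iota O) n (t : 'I_n -> F) (c : 'I_n -> K) :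
  (forall i, O (t i)) -> O (\sum_(i < n) iota (c i) * t i).
Proof.
have [O0 O1 OD OM ON] := valO hv; case: (hv) => hK _ _ _ Ot.
by apply: (big_ind O) => // i _; apply: OM.
Qed.

Lemma deg_le (P : place iota) r r' : is_degree P r -> is_degree P r' -> (r <= r')%N.
Proof.
case: P => O hv /=; rewrite /is_degree /=.
have [O0 O1 OD OM ON] := valO hv.
move=> [t [Ot _ ind]] [t' [Ot' span' _]].
pose phi (c : {ffun 'I_r -> K}) : {ffun 'I_r' -> K} :=
  finfun (sval (constructive_indefinite_description _
     (span' _ (Osum hv c Ot)))).
have phiP (c : {ffun _ -> K}) : in_P O (\sum_(i < r) iota (c i) * t i -
                      \sum_(i < r') iota (phi c i) * t' i).
  rewrite /phi; case: constructive_indefinite_description => c' /= H.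
  by congr (in_P O (_ - _)): H; apply: eq_bigr => i _; rewrite ffunE.
have phi_inj : injective phi.
  move=> c1 c2 e; apply/ffunP => i; apply/eqP; rewrite -subr_eq0; apply/eqP.
  have H := inP_add hv (phiP c1) (inP_opp hv (phiP c2)).
  rewrite e opprB addrA subrK in H.
  have {}H : in_P O (\sum_(i < r) iota ((c1 - c2) i) * t i).
    rewrite -sumrB in H; congr (in_P O _): H; apply: eq_bigr => j _.
    by rewrite ffunE ffunE rmorphB mulrBl.
  by move: (ind _ H i); rewrite !ffunE.
have := leq_card _ phi_inj; rewrite !card_ffun !card_ord.
by rewrite leq_exp2l // card_finNzRing_gt1.
Qed.

Lemma deg_unique (P : place iota) r r' : is_degree P r -> is_degree P r' -> r = r'.
Proof. by move=> h1 h2; apply/eqP; rewrite eqn_leq !(deg_le h1 h2, deg_le h2 h1). Qed.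

End Deg.


Unset Implicit Arguments.

Definition pb (P : Prop) : bool :=
  if excluded_middle_informative P then true else false.
Lemma pbP P : reflect P (pb P).
Proof. by rewrite /pb; case: excluded_middle_informative => h; constructor. Qed.

Lemma In_mem (T : eqType) (x : T) (l : seq T) : List.In x l <-> x \in l.
Proof.
elim: l => [|a l IH] //=; rewrite in_cons; split.
  by case=> [->|/IH ->]; rewrite ?eqxx ?orbT.
by case/orP => [/eqP ->|/IH]; [left|right].
Qed.

Lemma nodup_map (T : eqType) (U : Type) (h : T -> U) (l : seq T) :
  injective h -> uniq l -> List.NoDup (map h l).
Proof.
move=> hi; elim: l => [|a l IH] /=; first by constructor.
case/andP => nal ul; constructor; last exact: IH.
case/List.in_map_iff => b [/hi -> /In_mem]; exact/negP.
Qed.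

Section Places.
Variables (K : finFieldType) (F : fieldType) (iota : {rmorphism K -> F}).
Variables (n N G : nat) (B' : nat -> nat) (f : forall r, 'I_(B' r) -> place iota).
Hypothesis hBN : forall r, (r < n)%N -> (B' r <= N.+1)%N.
Hypothesis finj : forall r, injective (f r).
Hypothesis fdeg : forall r (i : 'I_(B' r)), is_degree (f r i) r.

Local Notation X := (Xt n N G).
Definition valid (x : X) := forall r : 'I_n, validr B' r (x r).

Definition Dx (x : X) : place iota -> nat := fun P =>
  (\sum_(r < n) \sum_(i < B' r) if pb (f r i = P) then (x r (inord i) : nat) else 0)%N.

Lemma f_eq r r' i i' : f r i = f r' i' -> r = r'.
Proof. by move=> e; apply: (deg_unique (fdeg r i)); rewrite e; apply: fdeg. Qed.

Lemma Dx_f x (r : 'I_n) (i : 'I_(B' r)) : Dx x (f r i) = x r (inord i).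
Proof.
rewrite /Dx (bigD1 r) //= (bigD1 i) //=.
have h1 : (\sum_(j < B' r | j != i)
   (if pb (f r j = f r i) then (x r (inord j) : nat) else 0) = 0)%N.
  apply: big1 => j hj; case: pbP => // /finj e; by rewrite e eqxx in hj.
have h2 : (\sum_(r' < n | r' != r) \sum_(j < B' r')
   (if pb (f r' j = f r i) then (x r' (inord j) : nat) else 0) = 0)%N.
  apply: big1 => r' hr'; apply: big1 => j _; case: pbP => // /f_eq e.
  by case/negP: hr'; apply/eqP; apply: val_inj.
rewrite h1 h2 !addn0; case: pbP => //.
Qed.

Lemma Dx_inj x1 x2 : valid x1 -> valid x2 -> Dx x1 =1 Dx x2 -> x1 = x2.
Proof.
move=> v1 v2 e; apply/ffunP => r; apply/ffunP => j.
case: (ltnP j (B' r)) => hj.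
  have := e (f r (Ordinal hj)); rewrite !Dx_f /= inord_val; exact: val_inj.
move: (forallP (v1 r) j) (forallP (v2 r) j); rewrite hj /= => /eqP -> /eqP ->.
by [].
Qed.

Definition dfun (P : place iota) : nat :=
  match excluded_middle_informative (exists r, is_degree P r) with
  | left h => sval (constructive_indefinite_description _ h)
  | right _ => 0%N end.

Lemma dfun_f r (i : 'I_(B' r)) : dfun (f r i) = r.
Proof.
rewrite /dfun; case: excluded_middle_informative => [h|[]]; last by exists r; apply: fdeg.
case: constructive_indefinite_description => r' /= h'.
exact: deg_unique h' (fdeg r i).
Qed.

Definition Jf (r : 'I_n) : finType := 'I_(B' r).
Local Notation Idx := {r : 'I_n & Jf r}.
Definition phi (p : Idx) := f (tag p) (tagged p).

Lemma phi_inj : injective phi.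
Proof.
case=> r1 i1 [r2 i2]; rewrite /phi /= => e.
have hr : r1 = r2 by apply: val_inj; exact: f_eq e.
subst r2; by rewrite (finj _ _ _ e).
Qed.

Lemma Dx_eff x : valid x -> eff_div_deg (Dx x) (degx x).
Proof.
move=> vx; exists (map phi (enum {: Idx})); split.
- by apply: nodup_map; [exact: phi_inj | exact: enum_uniq].
- move=> P hP; apply: NNPP => H; apply: hP; rewrite /Dx.
  apply: big1 => r _; apply: big1 => i _; case: pbP => // e.
  case: H; rewrite -e; apply/List.in_map_iff; exists (Tagged Jf (i : Jf r)); split => //.
  by apply/In_mem; rewrite mem_enum.
exists dfun; split.
  move=> P /List.in_map_iff [[r i] [<- _]]; rewrite /phi /= dfun_f; exact: fdeg.
rewrite big_map big_enum /=.
rewrite (eq_bigr (fun p : Idx => (x (tag p) (inord (tagged p)) : nat) * tag p)%N); last first.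
  by case=> r i _; rewrite /phi /= Dx_f dfun_f.
have E := @sig_big_dep nat 0%N addn _ Jf xpredT (fun r => xpredT) (fun r (i : Jf r) => (x r (inord i) : nat) * r)%N.
rewrite /= in E.
rewrite (eq_bigl xpredT); last by move=> p; rewrite inE.
rewrite -E /degx; apply: eq_bigr => r _.
rewrite -big_distrl /= mulnC; congr (_ * _)%N.
rewrite (big_ord_widen N.+1 (fun i => (x r (inord i) : nat)) (hBN _ (ltn_ord r))).
rewrite big_mkcond /ssum; apply: eq_bigr => j _; rewrite inord_val.
case: ltnP => // hj; move: (forallP (vx r) j); rewrite hj /= => /eqP -> //.
Qed.
Lemma card_le (A : nat -> nat) k (V : pred X) :
  card_is (fun D : place iota -> nat => eff_div_deg D k) (A k) ->
  (forall x, V x -> valid x /\ degx x = k) -> (#|V| <= A k)%N.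
Proof.
move=> hc hV; case: hc => fA [fAinj fAsur].
have ex x : V x -> exists i, fA i = Dx x.
  by move=> vx; have [v d] := hV x vx; apply/fAsur; rewrite -d; exact: Dx_eff.
move: fA fAinj fAsur ex; move: (A k) => [|m] fA fAinj fAsur ex.
  rewrite leqn0; apply/eqP; apply: eq_card0 => x; apply/negP => vx.
  by case: (ex x vx) => -[].
pose h x := odflt ord0 [pick i | pb (fA i = Dx x)].
have hP x : V x -> fA (h x) = Dx x.
  move=> vx; rewrite /h; case: pickP => [i /pbP //|none].
  by case: (ex x vx) => i e; have := none i; case: pbP.
have hinj : {in V &, injective h}.
  move=> x1 x2 v1 v2 e; apply: (Dx_inj x1 x2 (proj1 (hV _ v1)) (proj1 (hV _ v2))) => P.
  by rewrite -(hP _ v1) -(hP _ v2) e.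
by rewrite -(card_in_imset hinj) (leq_trans (max_card _)) ?card_ord.
Qed.

Local Open Scope ring_scope.
Lemma weighted (A : nat -> nat) (Q : rat) L (V : pred X) : 0 < Q ->
  (forall k, card_is (fun D : place iota -> nat => eff_div_deg D k) (A k)) ->
  (forall x, V x -> valid x /\ (degx x <= L)%N) ->
  \sum_(x | V x) (Q ^+ degx x)^-1 <= \sum_(0 <= k < L.+1) (A k)%:R / Q ^+ k.
Proof.
move=> Q0 hA hV.
rewrite (partition_big (fun x => (inord (degx x) : 'I_L.+1)) xpredT) //= big_mkord.
apply: ler_sum => j _.
rewrite (eq_bigr (fun _ => (Q ^+ j)^-1)); last first.
  move=> x /andP [vx /eqP <-]; rewrite inordK // ltnS; by case: (hV x vx).
rewrite sumr_const -[_ *+ _]mulr_natr mulrC ler_pM2r ?invr_gt0 ?exprn_gt0 // ler_nat.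
apply: card_le (hA j) _ => x /andP [vx /eqP e]; split; first by case: (hV x vx).
by rewrite -e inordK // ltnS; case: (hV x vx).
Qed.
End Places.


Local Open Scope ring_scope.

Definition wt (Q : rat) (r Bv b : nat) : rat :=
  (Q ^+ (r * b))^-1 * ('C(Bv + b - 1, b))%:R.

Lemma row0 (Q : rat) G r Bv : \sum_(b < G.+1 | (b : nat) == 0%N) wt Q r Bv b = 1.
Proof.
rewrite (big_pred1 ord0) => [|b]; last by rewrite /= -val_eqE.
by rewrite /wt /= muln0 expr0 invr1 mul1r bin0.
Qed.

Lemma rowle (Q : rat) G r Bv M : (M <= G)%N ->
  \sum_(b < G.+1 | (b <= M)%N) wt Q r Bv b = \sum_(0 <= b < M.+1) wt Q r Bv b.
Proof.
move=> hM; rewrite (big_nat_widen _ _ G.+1) // big_mkord; apply: eq_bigl => b.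
by rewrite ltnS.
Qed.

Lemma rowbt (Q : rat) G r Bv M : (M <= G)%N ->
  \sum_(b < G.+1 | (1 <= b)%N && (b <= M)%N) wt Q r Bv b
  = \sum_(0 <= b < M.+1) wt Q r Bv b - 1.
Proof.
move=> hM; rewrite -(rowle Q G r Bv M hM) [in RHS](bigD1 ord0) //=.
have -> : wt Q r Bv 0 = 1 by rewrite /wt muln0 expr0 invr1 mul1r bin0.
rewrite [1 + _]addrC addrK; apply: eq_bigl => b.
by rewrite andbC lt0n -val_eqE.
Qed.

Lemma term_le (a c r : nat) (P : pred nat) (F : nat -> nat) :
  (a <= r < c)%N -> P r -> (F r <= \sum_(a <= i < c | P i) F i)%N.
Proof.
move=> hr Pr; rewrite big_mkcond (bigD1_seq r) ?mem_index_iota ?iota_uniq //=.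
by rewrite Pr leq_addr.
Qed.


Lemma sum_or (T : finType) (P1 P2 : pred T) (w : T -> rat) :
  (forall x, P1 x -> P2 x -> False) ->
  \sum_(x | P1 x || P2 x) w x = \sum_(x | P1 x) w x + \sum_(x | P2 x) w x.
Proof.
move=> hd; rewrite (bigID P1) /=; congr (_ + _); apply: eq_bigl => x.
  by case: (P1 x); rewrite ?andbF.
case h1: (P1 x); case h2: (P2 x) => //=; exfalso; exact: hd h1 h2.
Qed.

Lemma sum_has (T : finType) (I : eqType) (P : I -> pred T) (rs : seq I) (w : T -> rat) :
  uniq rs ->
  (forall i j x, i \in rs -> j \in rs -> i != j -> P i x -> P j x -> False) ->
  \sum_(x | has (fun i => P i x) rs) w x = \sum_(i <- rs) \sum_(x | P i x) w x.
Proof.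
elim: rs => [|a rs IH] /=.
  by move=> _ _; rewrite big_nil big_pred0.
case/andP => nars urs hd; rewrite big_cons -IH; last first.
  by move=> i j x hi hj; apply: hd; rewrite in_cons ?hi ?hj orbT.
  by [].
apply: sum_or => x Pa /hasP [j hj Pj]; apply: (hd a j x) => //.
- by rewrite in_cons eqxx.
- by rewrite in_cons hj orbT.
- by apply/eqP => e; move: nars; rewrite e hj.
Qed.

Lemma sum_ind (n k c : nat) :
  (\sum_(r < n) (if (r : nat) == k then c else 0) <= c)%N.
Proof.
rewrite -big_mkcond; case: (ltnP k n) => hk.
  by rewrite (big_pred1 (Ordinal hk)) // => r; rewrite -val_eqE.
rewrite big_pred0 // => r; apply/eqP => e; move: (ltn_ord r).
by rewrite e ltnNge hk.
Qed.

Theorem theorem3p8 (q : nat) (K : finFieldType) (F : fieldType)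
  (iota : {rmorphism K -> F}) (g : nat) (A B : nat -> nat) :
  #|K| = q ->
  is_function_field iota ->
  full_constant_field iota ->
  is_genus iota g -> (2 <= g)%N ->
  (forall n : nat, card_is (fun D : place iota -> nat => eff_div_deg D n) (A n)) ->
  (forall r : nat, (1 <= r)%N ->
     card_is (fun P : place iota => is_degree P r) (B r)) ->
  let Q : rat := q%:R in
  let Sigma2 : rat := Q ^+ (g - 1) * \sum_(0 <= n < g - 1) (A n)%:R / Q ^+ n in
  let Sr (r M : nat) : rat :=
    \sum_(0 <= b < M.+1) (Q ^+ (r * b))^-1 * ('C(B r + b - 1, b))%:R in
  ((1 <= B 1)%N ->
   forall m : nat -> nat,
     (\sum_(1 <= r < g - 1 | (1 <= B r)%N) r * m r <= g - 2)%N ->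
     Q ^+ (g - 1) * \prod_(1 <= r < g - 1 | (1 <= B r)%N) Sr r (m r) <= Sigma2)
  /\
  (forall rs : seq nat, uniq rs ->
     (forall r, r \in rs -> (2 <= r <= g - 2)%N /\ (1 <= B r)%N) ->
     Q ^+ (g - 1) * Sr 1%N (g - 2)%N
     + Q ^+ (g - 1) * \sum_(r <- rs)
         (Sr 1%N ((g - 2) %% r)%N * (Sr r ((g - 2) %/ r)%N - 1))
     <= Sigma2).
Proof.
move=> hq hff hfc hgen g2 hA hB Q Sigma2 Sr.
pose B' r := if r == 0%N then 0%N else B r.
have hf r : exists fr : 'I_(B' r) -> place iota,
    injective fr /\ forall i, is_degree (fr i) r.
  case: r => [|r].
    by exists (fun i : 'I_(B' 0) => False_rect _ (notF (ltn_ord i))); split => [i|i]; case: i.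
  have [fr [finj fsur]] := hB r.+1 isT; exists fr; split => // i.
  by apply/fsur; exists i.
pose f r := sval (constructive_indefinite_description _ (hf r)).
have finj r : injective (f r).
  by rewrite /f; case: (constructive_indefinite_description _ _) => fr [].
have fdeg r i : is_degree (f r i) r.
  by rewrite /f; case: (constructive_indefinite_description _ _) => fr [].
pose n := (g - 1)%N; pose N := (\sum_(r < n) B' r)%N; pose G := g.
have hBN r : (r < n)%N -> (B' r <= N.+1)%N.
  by move=> hr; apply: leqW; rewrite /N (bigD1 (Ordinal hr)) //= leq_addr.
have Qgt0 : 0 < Q.
  by rewrite /Q ltr0n -hq (ltn_trans _ (card_finNzRing_gt1 _)).
have hg1 : (g - 1 = (g - 2).+1)%N by lia.
have hS : Sigma2 = Q ^+ (g - 1) * \sum_(0 <= k < (g - 2).+1) (A k)%:R / Q ^+ k.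
  by rewrite /Sigma2 -hg1.
have QX : 0 <= Q ^+ (g - 1) by rewrite exprn_ge0 // ltW.
have W := weighted K F iota n N G B' f hBN finj fdeg A Q (g - 2)%N _ Qgt0 hA.
split.
  move=> hB1 m hm.
  pose Pr r b := if (0 < r < g - 1)%N && (0 < B r)%N then (b <= m r)%N else (b == 0)%N.
  have hmr r : (0 < r < g - 1)%N -> (0 < B r)%N -> (m r <= g - 2)%N.
    move=> hr hBr; apply: leq_trans hm; apply: leq_trans (term_le 1 (g - 1) r (fun r => 0 < B r)%N (fun r => r * m r)%N hr hBr).
    by case/andP: hr => hr _; rewrite leq_pmull.
  have hP r b : Pr r b -> (b <= G)%N.
    rewrite /Pr; case: ifP => [/andP [hr hBr] hb|_ /eqP -> //].
    by apply: (leq_trans hb); apply: leq_trans (hmr _ hr hBr) _; rewrite /G leq_subr.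
  rewrite hS; apply: ler_wpM2l => //.
  have GP := @gen_prod n N G B' Q hBN Pr hP.
  have Hprod : \prod_(1 <= r < g - 1 | (0 < B r)%N) Sr r (m r) =
      \prod_(r < n) \sum_(b < G.+1 | Pr r b) wt Q r (B' r) b.
    rewrite -(big_mkord xpredT (fun r => \sum_(b < G.+1 | Pr r b) wt Q r (B' r) b)).
    rewrite big_ltn; last by rewrite /n; lia.
    rewrite (eq_bigl (fun b : 'I_G.+1 => (b:nat) == 0%N)); last by move=> b.
    rewrite row0 mul1r big_mkcond; apply: eq_big_nat => r hr.
    have hr' : (0 < r < g - 1)%N by [].
    have eB : B' r = B r by rewrite /B'; case: r hr {hr'} => [|r] //.
    case hBr: (0 < B r)%N.
      rewrite (eq_bigl (fun b : 'I_G.+1 => (b <= m r)%N)); last first.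
        by move=> b; rewrite /Pr hr' hBr.
      rewrite (rowle Q G r (B' r) (m r)) ?eB //.
      by apply: leq_trans (hmr _ hr' hBr) _; rewrite /G leq_subr.
    rewrite (eq_bigl (fun b : 'I_G.+1 => (b:nat) == 0%N)); last first.
      by move=> b; rewrite /Pr hr' hBr.
    by rewrite row0.
  rewrite Hprod -GP; apply: W => x hx; split.
    by move=> r; case/andP: (forallP hx r).
  apply: leq_trans hm; rewrite /degx.
  apply: (@leq_trans (\sum_(r < n) (if (0 < r < g - 1)%N && (0 < B r)%N then r * m r else 0))%N).
    apply: leq_sum => r _; move: (forallP hx r) => /andP [_]; rewrite /Pr.
    case: ifP => _ hb; first by rewrite leq_mul2l hb orbT.
    by rewrite (eqP hb) muln0.
  rewrite -(big_mkord xpredT (fun r => if (0 < r < g - 1)%N && (0 < B r)%N then r * m r else 0)%N).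
  rewrite big_ltn; last by rewrite /n; lia.
  rewrite /= add0n [X in (_ <= X)%N]big_mkcond; apply: eq_leq; apply: eq_big_nat => r hr.
  by rewrite hr.
move=> rs urs hrs.
pose M1 r := ((g - 2) %% r)%N; pose M2 r := ((g - 2) %/ r)%N.
pose P0 r b := if r == 1%N then (b <= g - 2)%N else b == 0%N.
pose Pq p r b := if r == 1%N then (b <= M1 p)%N
   else if r == p then (0 < b)%N && (b <= M2 p)%N else b == 0%N.
pose V0 (x : Xt n N G) := [forall r : 'I_n, validr B' r (x r) && P0 r (ssum (x r))].
pose Vq p (x : Xt n N G) := [forall r : 'I_n, validr B' r (x r) && Pq p r (ssum (x r))].
have hrs' p : p \in rs -> (1 < p)%N /\ (p < n)%N /\ (0 < B p)%N.
  by move=> /hrs [/andP [h1 h2] h3]; split => //; split => //; rewrite /n; lia.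
have hP0 r b : P0 r b -> (b <= G)%N.
  rewrite /P0; case: ifP => _ hb; last by rewrite (eqP hb).
  by apply: leq_trans hb _; rewrite /G leq_subr.
have hPq p r b : Pq p r b -> (b <= G)%N.
  rewrite /Pq; case: ifP => _ hb.
    by apply: leq_trans hb _; rewrite /M1 /G (leq_trans (leq_mod _ _)) ?leq_subr.
  move: hb; case: ifP => _ hb; last by rewrite (eqP hb).
  case/andP: hb => _ hb.
  by apply: leq_trans hb _; rewrite /M2 /G (leq_trans (leq_div _ _)) ?leq_subr.
have E0 : \sum_(x | V0 x) (Q ^+ degx x)^-1 = Sr 1%N (g - 2)%N.
  rewrite (@gen_prod n N G B' Q hBN P0 hP0).
  case: (ltnP 1 n) => h1.
    rewrite (bigD1 (Ordinal h1)) //= (eq_bigl (fun b : 'I_G.+1 => (b <= g - 2)%N)) //.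
    rewrite (rowle Q G 1 (B' 1) (g - 2)) ?leq_subr //.
    rewrite [\prod_(_ < _ | _) _]big1 ?mulr1 // => r hr.
    rewrite (eq_bigl (fun b : 'I_G.+1 => (b:nat) == 0%N)) ?row0 // => b.
    by rewrite -val_eqE /= in hr; rewrite /P0 (negbTE hr).
  have e : (g - 2 = 0)%N by rewrite /n in h1; lia.
  rewrite e /Sr big_nat1 muln0 expr0 invr1 mul1r bin0.
  apply: big1 => r _.
  rewrite (eq_bigl (fun b : 'I_G.+1 => (b:nat) == 0%N)) ?row0 // => b.
  have r0 : ((r : nat) == 1%N) = false by apply/negbTE; rewrite neq_ltn (leq_trans (ltn_ord r) h1).
  by rewrite /P0 r0.
have Eq p : p \in rs -> \sum_(x | Vq p x) (Q ^+ degx x)^-1 = Sr 1%N (M1 p) * (Sr p (M2 p) - 1).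
  move=> /hrs' [hp1 [hpn hBp]].
  rewrite (@gen_prod n N G B' Q hBN (Pq p) (hPq p)).
  have h1 : (1 < n)%N by lia.
  have p1 : (p == 1%N) = false by rewrite gtn_eqF.
  rewrite (bigD1 (Ordinal h1)) //= (bigD1 (Ordinal hpn)) /=; last by rewrite -val_eqE /= p1.
  rewrite [\prod_(_ < _ | _) _]big1 ?mulr1; last first.
    move=> r /andP [hr1 hrp].
    rewrite -val_eqE /= in hr1; rewrite -val_eqE /= in hrp.
    rewrite (eq_bigl (fun b : 'I_G.+1 => (b:nat) == 0%N)) ?row0 // => b.
    by rewrite /Pq (negbTE hr1) (negbTE hrp).
  congr (_ * _).
    rewrite (eq_bigl (fun b : 'I_G.+1 => (b <= M1 p)%N)) //.
    by rewrite (rowle Q G 1 (B' 1) (M1 p)) // /M1 /G (leq_trans (leq_mod _ _)) ?leq_subr.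
  rewrite (eq_bigl (fun b : 'I_G.+1 => (0 < b)%N && (b <= M2 p)%N)); last first.
    by move=> b; rewrite /Pq p1 eqxx.
  have eB : B' p = B p by rewrite /B'; case: p hp1 {p1 hpn hBp} => [|p].
  rewrite (rowbt Q G p (B' p) (M2 p)) ?eB //.
  by rewrite /M2 /G (leq_trans (leq_div _ _)) ?leq_subr.
have D0 x : V0 x -> (degx x <= g - 2)%N.
  move=> hx; rewrite /degx; apply: leq_trans (sum_ind n 1 (g - 2)); apply: leq_sum => r _.
  move: (forallP hx r) => /andP [_]; rewrite /P0.
  by case: ifP => [/eqP -> hb| _ /eqP ->]; rewrite ?mul1n ?muln0.
have Dq p x : p \in rs -> Vq p x -> (degx x <= g - 2)%N.
  move=> /hrs' [hp1 _] hx; rewrite /degx.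
  apply: (@leq_trans (\sum_(r < n) ((if (r:nat) == 1%N then M1 p else 0)
        + (if (r:nat) == p then p * M2 p else 0)))%N).
    apply: leq_sum => r _; move: (forallP hx r) => /andP [_]; rewrite /Pq.
    case: ifP => [/eqP e hb|h1].
      by rewrite e mul1n /=; apply: leq_trans hb (leq_addr _ _).
    case: ifP => [/eqP e /andP [_ hb]|_ /eqP ->]; last by rewrite muln0.
    by rewrite /= add0n e leq_mul2l hb orbT.
  rewrite big_split /=.
  apply: leq_trans (leq_add (sum_ind n 1 (M1 p)) (sum_ind n p (p * M2 p))) _.
  by rewrite /M1 /M2 addnC mulnC -divn_eq.
have hd0 x : V0 x -> has (fun p => Vq p x) rs -> False.
  move=> h0 /hasP [p hp hqq]; have [hp1 [hpn _]] := hrs' p hp.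
  move: (forallP h0 (Ordinal hpn)) (forallP hqq (Ordinal hpn)) => /andP [_ +] /andP [_ +].
  by rewrite /P0 /Pq /= gtn_eqF // eqxx => /eqP ->.
have hd p1 p2 x : p1 \in rs -> p2 \in rs -> p1 != p2 -> Vq p1 x -> Vq p2 x -> False.
  move=> h1 h2 h12 v1 v2; have [hp1 [hpn _]] := hrs' p1 h1.
  move: (forallP v1 (Ordinal hpn)) (forallP v2 (Ordinal hpn)) => /andP [_ +] /andP [_ +].
  by rewrite /Pq /= gtn_eqF // eqxx (negbTE h12) => /andP [hpos _] /eqP e; by rewrite e in hpos.
rewrite hS -mulrDr; apply: ler_wpM2l => //.
have -> : \sum_(r <- rs) Sr 1%N ((g - 2) %% r)%N * (Sr r ((g - 2) %/ r)%N - 1)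
    = \sum_(p <- rs) \sum_(x | Vq p x) (Q ^+ degx x)^-1.
  by rewrite big_seq_cond [RHS]big_seq_cond; apply: eq_bigr => p /andP [hp _]; rewrite Eq.
rewrite -E0 -(@sum_has _ _ Vq rs (fun x => (Q ^+ degx x)^-1) urs hd).
rewrite -(@sum_or _ V0 (fun x => has (fun p => Vq p x) rs) (fun x => (Q ^+ degx x)^-1) hd0).
apply: W => x hx; split.
  case/orP: hx => [h|/hasP [p hp h]] r; by case/andP: (forallP h r).
by case/orP: hx => [/D0 //|/hasP [p hp h]]; apply: Dq hp h.
Qed.
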